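(* Let $G$ be a finite GVZ-group with $|\mathrm{cd}(G)|=2$. Let $N$ be a normal subgroup of $G$ such that $G'\not\subseteq N$ and $[Z(\chi),G]\subseteq N$ for some $\chi\in\mathrm{nl}(G)$. Then $Z(G/N)=Z(\chi)/N$.
   Context: All groups are finite. $\mathrm{Irr}(G)$ is the set of complex irreducible characters of $G$, $\mathrm{nl}(G)$ the set of non-linear irreducible characters, and $\mathrm{cd}(G)=\{\chi(1):\chi\in\mathrm{Irr}(G)\}$. For a character $\chi$, $Z(\chi)=\{g\in G: |\chi(g)|=\chi(1)\}$. A nonabelian group $G$ is a GVZ-group if for every $\chi\in\mathrm{Irr}(G)$ we have $\chi(g)=0$ for all $g\in G\setminus Z(\chi)$. *)

(* Defs.v *)
From mathcomp Require Import all_boot all_order all_algebra all_fingroup all_solvable all_field all_character.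
Set Implicit Arguments. Unset Strict Implicit. Unset Printing Implicit Defensive.
Import GRing.Theory Num.Theory.
Local Open Scope ring_scope.

Definition cd (gT : finGroupType) (G : {group gT}) : seq algC :=
  undup [seq 'chi[G]_i 1%g | i <- enum (Iirr G)].

Definition nonlinear_irr (gT : finGroupType) (G : {group gT}) (i : Iirr G) : bool :=
  ('chi[G]_i 1%g != 1%R).

Definition GVZ (gT : finGroupType) (G : {group gT}) : Prop :=
  ~~ abelian G /\
  forall (i : Iirr G) (g : gT), g \in G -> g \notin ('Z('chi[G]_i))%CF -> 'chi[G]_i g = 0%R.

(* Main.v *)
Require Import Defs.
From mathcomp Require Import all_boot all_order all_algebra all_fingroup all_solvable all_field all_character.
Local Open Scope ring_scope.
Import GRing.Theory Num.Theory.

Lemma two_elems (T : eqType) (s : seq T) (x y z : T) :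
  size s = 2%N -> x \in s -> y \in s -> z \in s -> x != y -> z != x -> z = y.
Proof.
case: s => [|a [|b [|c s]]] //= _; rewrite !inE.
move=> /orP[]/eqP-> /orP[]/eqP-> /orP[]/eqP->; rewrite ?eqxx //.
Qed.

Theorem mainTheorem11 (gT : finGroupType) (G N : {group gT}) (i : Iirr G) :
  GVZ G -> size (cd G) = 2%N -> (N <| G)%g -> ~~ ([~: G, G] \subset N)%g ->
  nonlinear_irr i -> ([~: ('Z('chi[G]_i))%CF, G] \subset N)%g ->
  ('Z(G / N) = ('Z('chi[G]_i))%CF / N)%g.
Proof.
Open Scope group_scope. Open Scope ring_scope.
move=> [_ hGVZ] hcd nNG nGN nli hZ.
set Z := ('Z('chi[G]_i))%CF.
have nNG' : (G \subset 'N(N))%g by apply: normal_norm.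
have sZG : Z \subset G := cfcenter_sub _.
have memcd : forall k : Iirr G, 'chi_k 1%g \in cd G.
  by move=> k; rewrite /cd mem_undup; apply: map_f; rewrite mem_enum.
have ha : ('chi_i 1%g) ^+ 2 = #|G : Z|%:R.
  apply/eqP; rewrite (irr1_bound i); apply/cfun_onP => x xZ.
  have [Gx|nGx] := boolP (x \in G); first exact: hGVZ.
  by rewrite cfun0.
have sZZ : (Z / N \subset 'Z(G / N))%g.
  rewrite subsetI quotientS //; exact: quotient_cents2r.
have [j hj] : exists j : Iirr (G / N), 'chi_j 1%g != 1.
  apply/existsP; rewrite -negb_forall; apply: contra nGN => /forallP hall.
  rewrite -derg1; apply: der1_min => //; apply/char_abelianP => k.
  by rewrite qualifE/= irr_char /= (hall k).
have hj1 : 'chi_j 1%g = 'chi_i 1%g.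
  have := memcd (mod_Iirr j); rewrite mod_IirrE // cfMod1 => hm.
  have := @two_elems _ _ _ _ _ hcd (memcd 0) (memcd i) hm; rewrite irr0 cfun11.
  by apply; rewrite // eq_sym.
have hc := irr1_bound j; rewrite hj1 ha in hc.
have hc' : (#|G : Z| <= #|G / N : 'Z('chi_j)%CF|)%N by rewrite -(ler_nat algC) (hc.1).
have hd : (#|G / N : 'Z('chi_j)%CF| <= #|G / N : 'Z(G / N)|)%N.
  apply: dvdn_leq; first exact: indexg_gt0.
  apply: indexgS; have := bigcap_inf j (P:=predT) (F:=fun k => 'Z('chi[G / N]_k)%CF) isT; rewrite cap_cfcenter_irr; exact.
have he : (#|G / N : 'Z(G / N)| <= #|G / N : Z / N|)%N.
  by apply: dvdn_leq; [exact: indexg_gt0 | apply: indexgS].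
have hf : (#|G / N : Z / N| <= #|G : Z|)%N.
  apply: dvdn_leq; first exact: indexg_gt0.
  apply: (index_morphim (coset_morphism N)).
  by apply: subset_trans nNG'; apply: subsetIl.
have eqi : #|G / N : 'Z(G / N)| = #|G / N : Z / N|.
  by apply/eqP; rewrite eqn_leq he /=; apply: leq_trans hf (leq_trans hc' hd).
have sZb : ('Z(G / N) \subset G / N)%g := center_sub _.
have sZNb : (Z / N \subset G / N)%g := quotientS _ sZG.
apply/eqP; rewrite eq_sym eqEcard sZZ /=.
have L1 := Lagrange sZb; have L2 := Lagrange sZNb.
rewrite eqi -L2 in L1.
have apos := indexg_gt0 (G / N) (Z / N)%G.
by move/eqP: L1; rewrite eqn_pmul2r // => /eqP ->.
Qed.
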